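(* Up to multiplication by a positive integer, every basic weight of a basic system of type $D$ is one of the following (coordinates $\lambda_k=\langle\lambda,e_k\rangle$): (1) $(D_4,2,2)$: $(1,0,1,0)$, $(0,-1,1,0)$; (2) $(D_5,3,3)$: $(1,0,-1,1,0)$.
   Context: $D_n$ ($n\ge4$) is realized in $\mathbb R^n$ with orthonormal basis $e_1,\dots,e_n$ and standard inner product, simple roots $\alpha_k=e_k-e_{k+1}$ ($k<n$), $\alpha_n=e_{n-1}+e_n$. Let $W$ be the Weyl group, $\alpha^\vee=2\alpha/\langle\alpha,\alpha\rangle$. A weight is integral if $\langle\lambda,\alpha^\vee\rangle\in\mathbb Z$ for all roots $\alpha$; $\overline\lambda$ is the dominant weight in $W\lambda$. For $I=\Delta\setminus\{\alpha_i\}$, $J=\Delta\setminus\{\alpha_j\}$, a basic weight of $(\Phi,i,j)$ is an integral $\lambda$ with $\langle\lambda,\alpha^\vee\rangle\in\mathbb Z_{>0}$ for all $\alpha\in I$ and $\{\alpha\in\Delta:\langle\overline\lambda,\alpha\rangle=0\}=J$; $(\Phi,i,j)$ is a basic system if it has a basic weight. *)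

(* Defs.v *)
From HB Require Import structures.
From mathcomp Require Import all_boot all_order all_algebra.
From mathcomp Require Import reals.
Set Implicit Arguments. Unset Strict Implicit. Unset Printing Implicit Defensive.
Import Order.TTheory GRing.Theory Num.Theory.
Local Open Scope ring_scope.

(* Vectors of R^n are functions 'I_n -> R; coordinate k (0-based) is the
   paper's coordinate k+1, i.e. <x, e_{k+1}>. *)
Section DRoot.
Variables (R : realType) (n : nat).

Definition vec := 'I_n -> R.

Definition dotv (x y : vec) : R := \sum_(k < n) x k * y k.

Definition ebasis (k : 'I_n) : vec := fun l => if l == k then 1 else 0.

Definition addv (x y : vec) : vec := fun l => x l + y l.
Definition scalev (c : R) (x : vec) : vec := fun l => c * x l.

Definition is_root (v : vec) : Prop :=
  exists (a b : 'I_n) (s t : bool), a != b /\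
    v = addv (scalev ((-1) ^+ s) (ebasis a)) (scalev ((-1) ^+ t) (ebasis b)).

(* simple roots: alpha_k = e_k - e_{k+1} (k < n-1, 0-based), and
   alpha_{n-1} = e_{n-2} + e_{n-1} (0-based); i.e. the paper's
   alpha_1, ..., alpha_n shifted by one. *)
Definition simple_root (k : 'I_n) : vec := fun l =>
  if (k.+1 < n)%N then
    (if val l == val k then 1 else 0) - (if val l == k.+1 then 1 else 0)
  else
    (if val l == n.-2 then 1 else 0) + (if val l == n.-1 then 1 else 0).

Definition coroot (a : vec) : vec := scalev (2 / dotv a a) a.

Definition reflection (a : vec) (x : vec) : vec :=
  addv x (scalev (- dotv x (coroot a)) a).

(* W-orbit: W is generated by the reflections s_alpha, alpha a root *)
Inductive in_Worbit (lam : vec) : vec -> Prop :=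
| Worb_refl : in_Worbit lam lam
| Worb_step : forall mu a, in_Worbit lam mu -> is_root a ->
    in_Worbit lam (reflection a mu).

Definition is_integral (lam : vec) : Prop :=
  forall a, is_root a -> exists z : int, dotv lam (coroot a) = z%:~R.

Definition is_dominant (mu : vec) : Prop :=
  forall k : 'I_n, 0 <= dotv mu (coroot (simple_root k)).

(* basic weight of (D_n, i, j): I = Delta \ {alpha_i}, J = Delta \ {alpha_j};
   lambda-bar is the dominant weight in W lambda. *)
Definition is_basic_weight (i j : 'I_n) (lam : vec) : Prop :=
  is_integral lam /\
  (forall k : 'I_n, k != i ->
     exists m : nat, (0 < m)%N /\ dotv lam (coroot (simple_root k)) = m%:R) /\
  (exists mu, in_Worbit lam mu /\ is_dominant mu /\
     forall k : 'I_n, dotv mu (simple_root k) = 0 <-> k != j).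

End DRoot.

(* Main.v *)
Require Import Defs.
From HB Require Import structures.
From mathcomp Require Import all_boot all_order all_algebra.
From mathcomp Require Import reals.
From mathcomp Require Import ring lra zify.
Set Implicit Arguments. Unset Strict Implicit. Unset Printing Implicit Defensive.
Import Order.TTheory GRing.Theory Num.Theory.
Local Open Scope ring_scope.
Section Aux.
Variable R : realType.

Lemma dotvC n (x y : vec R n) : dotv x y = dotv y x.
Proof. by rewrite /dotv; apply: eq_bigr => k _; rewrite mulrC. Qed.

Lemma dotvDr n (x y z : vec R n) : dotv x (Defs.addv y z) = dotv x y + dotv x z.
Proof. by rewrite /dotv -big_split; apply: eq_bigr => k _; rewrite /Defs.addv mulrDr. Qed.

Lemma dotvZr n c (x y : vec R n) : dotv x (scalev c y) = c * dotv x y.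
Proof. by rewrite /dotv mulr_sumr; apply: eq_bigr => k _; rewrite /scalev mulrCA. Qed.

Lemma dotvDl n (x y z : vec R n) : dotv (Defs.addv y z) x = dotv y x + dotv z x.
Proof. by rewrite dotvC dotvDr !(dotvC x). Qed.

Lemma dotvZl n c (x y : vec R n) : dotv (scalev c y) x = c * dotv y x.
Proof. by rewrite dotvC dotvZr dotvC. Qed.

Lemma dotv_e n (x : vec R n) a : dotv x (ebasis R a) = x a.
Proof.
rewrite /dotv (bigD1 a) //= /ebasis eqxx mulr1 big1 ?addr0 // => k /negbTE ->.
by rewrite mulr0.
Qed.

Lemma dot_coroot n (a x : vec R n) : dotv a a = 2 -> dotv x (coroot a) = dotv x a.
Proof. by move=> h; rewrite /coroot dotvZr h divff ?mul1r // pnatr_eq0. Qed.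

Lemma refl_ss_gen n (a x : vec R n) : dotv a a = 2 ->
  dotv (reflection a x) (reflection a x) = dotv x x.
Proof.
move=> h; rewrite /reflection dot_coroot //.
rewrite !dotvDl !dotvDr !dotvZl !dotvZr h (dotvC a x).
ring.
Qed.

Section Root.
Variables (n : nat) (a b : 'I_n) (s t : bool).
Hypothesis hab : a != b.
Let a0 : vec R n := Defs.addv (scalev ((-1) ^+ s) (ebasis R a)) (scalev ((-1) ^+ t) (ebasis R b)).

Lemma a0_val l : a0 l = (-1) ^+ s * (if l == a then 1 else 0) + (-1) ^+ t * (if l == b then 1 else 0).
Proof. by []. Qed.

Lemma root_norm : dotv a0 a0 = 2.
Proof.
rewrite /a0 dotvDr !dotvZr !dotv_e -/a0 !a0_val eqxx (negbTE hab) eq_sym (negbTE hab).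
by case: s; case: t; rewrite /= ?expr0 ?expr1 eqxx; lra.
Qed.

Lemma refl_val (x : vec R n) l :
  reflection a0 x l = x l - ((-1) ^+ s * x a + (-1) ^+ t * x b) * a0 l.
Proof.
rewrite /reflection /Defs.addv /scalev dot_coroot ?root_norm //.
by rewrite /a0 dotvDr !dotvZr !dotv_e mulNr.
Qed.

Lemma refl_pm (x : vec R n) l : exists k, x l = reflection a0 x k \/ x l = - reflection a0 x k.
Proof.
have hba : (b == a) = false by rewrite eq_sym (negbTE hab).
case: (eqVneq l a) => [->|hla].
  exists b; rewrite refl_val a0_val hba eqxx.
  by case: s; case: t; rewrite /= ?expr0 ?expr1; first [left; lra | right; lra].
case: (eqVneq l b) => [->|hlb].
  exists a; rewrite refl_val a0_val (negbTE hab) eqxx.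
  by case: s; case: t; rewrite /= ?expr0 ?expr1; first [left; lra | right; lra].
exists l; left; rewrite refl_val a0_val (negbTE hla) (negbTE hlb); lra.
Qed.

Lemma refl_ss (x : vec R n) : dotv (reflection a0 x) (reflection a0 x) = dotv x x.
Proof. exact: refl_ss_gen root_norm. Qed.
End Root.

Lemma orbit_inv n (lam mu : vec R n) : in_Worbit lam mu ->
  (forall l, exists k, lam l = mu k \/ lam l = - mu k) /\ dotv mu mu = dotv lam lam.
Proof.
elim=> [|mu' a0 _ [IH1 IH2] [a [b [s [t [hab ->]]]]]].
  by split=> // l; exists l; left.
split; last by rewrite refl_ss.
move=> l; case: (IH1 l) => k hk; case: (refl_pm s t hab mu' k) => k' hk'.
exists k'; case: hk => ->; case: hk' => ->; rewrite ?opprK; by [left|right].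
Qed.

End Aux.
Section Aux2.
Variable R : realType.

Lemma sum_ind p (x : vec R p.+1) (a : nat) : (a <= p)%N ->
  \sum_(l < p.+1) x l * (if val l == a then 1 else 0) = x (inord a).
Proof.
move=> ha; rewrite (bigD1 (inord a)) //= inordK // eqxx mulr1 big1 ?addr0 //.
move=> l hl; case: eqP => [e|_]; last by rewrite mulr0.
by move: hl; rewrite -e inord_val eqxx.
Qed.

Lemma dot_simple p (x : vec R p.+1) (k : 'I_p.+1) :
  dotv x (simple_root R k) =
  if (k.+1 < p.+1)%N then x (inord k) - x (inord k.+1) else x (inord p.-1) + x (inord p).
Proof.
rewrite /dotv /simple_root; case: ifP => hk.
  under eq_bigr => l _ do rewrite mulrBr.
  by rewrite sumrB !sum_ind // -ltnS; apply: (ltn_ord k).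
under eq_bigr => l _ do rewrite mulrDr.
rewrite big_split /= !sum_ind //; lia.
Qed.

Lemma simple_norm p (k : 'I_p.+1) : (2 <= p)%N ->
  dotv (simple_root R k) (simple_root R k) = 2.
Proof.
move=> hp; rewrite dot_simple; case: ifP => hk.
  rewrite /simple_root /= hk !inordK // !eqxx (gtn_eqF (ltnSn _)) (ltn_eqF (ltnSn _)); lra.
rewrite /simple_root /= hk !inordK //; last by lia.
have -> : (p.-1 == p) = false by apply/eqP; lia.
have -> : (p == p.-1) = false by apply/eqP; lia.
rewrite !eqxx; lra.
Qed.

Lemma dot_cs p (x : vec R p.+1) (k : 'I_p.+1) : (2 <= p)%N ->
  dotv x (coroot (simple_root R k)) = dotv x (simple_root R k).
Proof. by move=> hp; rewrite dot_coroot // simple_norm. Qed.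

Definition in3 (c x : R) := x = 0 \/ x = c \/ x = - c.

Lemma Gstruct (G : nat -> R) (p j : nat) : (2 <= p)%N -> (j <= p)%N ->
  (forall k, (k < p)%N -> (G k - G k.+1 = 0 <-> (k != j))) ->
  (G p.-1 + G p = 0 <-> (p != j)) ->
  (forall k, (k <= p)%N -> in3 (G 0%N) (G k)) /\ G 0%N != 0.
Proof.
move=> hp hj H1 H2.
have hA : forall k, (k <= j)%N -> G k = G 0%N.
  elim=> [//|k IH] hk; rewrite -IH; last by lia.
  have := proj2 (H1 k ltac:(lia)) ltac:(apply/eqP; lia); lra.
have hB : forall t, (j.+1 + t <= p)%N -> G (j.+1 + t)%N = G j.+1.
  elim=> [|t IH] ht; first by rewrite addn0.
  rewrite addnS -IH; last by lia.
  have := proj2 (H1 (j.+1 + t)%N ltac:(lia)) ltac:(apply/eqP; lia); lra.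
have [hjp|hjp] : (j < p)%N \/ j = p by lia.
2:{ subst j; split.
    by move=> k hk; right; left; apply: hA.
  apply/eqP => h0.
  suff: (p != p) by rewrite eqxx. apply: (proj1 H2).
  rewrite !hA ?h0 ?leq_pred //; lra. }
have g1 : G j.+1 = 0 \/ G j.+1 = - G 0%N.
  have [h|h] : (j.+1 < p)%N \/ j.+1 = p by lia.
  + left; have := proj2 H2 ltac:(apply/eqP; lia).
    have e1 : p.-1 = (j.+1 + (p.-1 - j.+1))%N by lia.
    have e2 : p = (j.+1 + (p - j.+1))%N by lia.
    rewrite {1}e1 {2}e2 !hB; [lra|lia|lia].
  + right; have := proj2 H2 ltac:(apply/eqP; lia).
    have e : p.-1 = j by lia.
    rewrite e -h (hA j) //; lra.
split.
  move=> k hk; case: (leqP k j) => hkj; first by right; left; apply: hA.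
  have e : k = (j.+1 + (k - j.+1))%N by lia.
  rewrite e hB; last by lia.
  by case: g1 => ->; [left|right; right].
apply/eqP => h0; suff: (j != j) by rewrite eqxx. apply: (proj1 (H1 j hjp)).
rewrite hA // h0; case: g1 => ->; lra.
Qed.

Lemma chain4 (c a b x y : R) : in3 c a -> in3 c b -> in3 c x -> in3 c y ->
  0 < a - b -> 0 < b - x -> 0 < x - y -> False.
Proof. by case=> [->|[->|->]]; case=> [->|[->|->]]; case=> [->|[->|->]]; case=> [->|[->|->]]; lra. Qed.

Lemma tail3 (c x y z : R) : in3 c x -> in3 c y -> in3 c z ->
  0 < x - y -> 0 < y - z -> 0 < y + z -> False.
Proof. by case=> [->|[->|->]]; case=> [->|[->|->]]; case=> [->|[->|->]]; lra. Qed.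

Lemma tri (c a b x y : R) : in3 c a -> in3 c b -> in3 c x -> in3 c y ->
  0 < a - b -> 0 < b - x -> 0 < x + y -> False.
Proof. by case=> [->|[->|->]]; case=> [->|[->|->]]; case=> [->|[->|->]]; case=> [->|[->|->]]; lra. Qed.

End Aux2.
Section Aux3.
Variable R : realType.

Lemma tailvals (c y z : R) : 0 < c -> in3 c y -> in3 c z -> 0 < y - z -> 0 < y + z ->
  y = c /\ z = 0.
Proof.
move=> hc; case=> [->|[->|->]]; case=> [->|[->|->]] => h1 h2;
  first [by exfalso; lra | by []].
Qed.

Lemma chain3vals (c a b x : R) : 0 < c -> in3 c a -> in3 c b -> in3 c x ->
  0 < a - b -> 0 < b - x -> a = c /\ b = 0 /\ x = - c.
Proof.
move=> hc; case=> [->|[->|->]]; case=> [->|[->|->]]; case=> [->|[->|->]] => h1 h2;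
  first [by exfalso; lra | by []].
Qed.

Lemma pairvals (c a b d : R) : 0 < c -> in3 c a -> in3 c b -> a - b = d -> 0 < d ->
  (a = c /\ b = 0) \/ (a = c /\ b = - c) \/ (a = 0 /\ b = - c).
Proof.
move=> hc; case=> [->|[->|->]]; case=> [->|[->|->]] => h1 h2;
  first [by exfalso; lra | by left | by right; left | by right; right].
Qed.

Lemma sscontra (c C : R) (k1 k2 : nat) : 0 < c -> C = c * c ->
  k1%:R * C = k2%:R * C -> k1 = k2.
Proof.
move=> hc -> h; apply/eqP; rewrite -(eqr_nat R); apply/eqP.
by apply: (mulIf _ h); rewrite mulf_neq0 // gt_eqF.
Qed.

Lemma final4 (c d L0 L1 L2 L3 G0 G1 G2 G3 : R) (j : nat) :
  0 < c -> in3 c L0 -> in3 c L1 -> in3 c L2 -> in3 c L3 -> G0 * G0 = c * c ->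
  L0 - L1 = d -> 0 < d -> 0 < L2 - L3 -> 0 < L2 + L3 ->
  (G0 - G1 = 0 <-> (0 != j)%N) -> (G1 - G2 = 0 <-> (1 != j)%N) ->
  (G2 - G3 = 0 <-> (2 != j)%N) -> (G2 + G3 = 0 <-> (3 != j)%N) -> (j <= 3)%N ->
  0 + G0 * G0 + G1 * G1 + G2 * G2 + G3 * G3 = 0 + L0 * L0 + L1 * L1 + L2 * L2 + L3 * L3 ->
  j = 1%N /\ ((L0 = d /\ L1 = 0 /\ L2 = d /\ L3 = 0) \/ (L0 = 0 /\ L1 = -d /\ L2 = d /\ L3 = 0)).
Proof.
move=> hc h0 h1 h2 h3 hG hd hdp h23 h23' e0 e1 e2 e3 hj hss.
have [hL2 hL3] := tailvals hc h2 h3 h23 h23'.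
have h01 := pairvals hc h0 h1 hd hdp.
subst L2 L3.
have hsL : exists2 k, (k = 2%N /\ ((L0 = c /\ L1 = 0) \/ (L0 = 0 /\ L1 = -c))) \/ k = 3%N & 0 + L0 * L0 + L1 * L1 + c * c + 0 * 0 = k%:R * (c * c).
  case: h01 => [[-> ->]|[[-> ->]|[-> ->]]].
  + by exists 2%N; [left; split => //; left | ring].
  + by exists 3%N; [right | ring].
  + by exists 2%N; [left; split => //; right | ring].
case: hsL => k hk hsL; rewrite hsL -hG in hss.
case: j hj e0 e1 e2 e3 hss => [|[|[|[|j]]]] // _ e0 e1 e2 e3 hss.
- have a1 := proj2 e1 isT; have a2 := proj2 e2 isT; have a3 := proj2 e3 isT.
  have [x1 [x2 x3]] : G1 = 0 /\ G2 = 0 /\ G3 = 0 by clear -a1 a2 a3; lra.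
  subst G1 G2 G3; exfalso.
  have : (1%N)%:R * (G0 * G0) = k%:R * (G0 * G0) by rewrite -hss mul1r !mul0r !addr0 add0r.
  move/(sscontra hc hG) => ek; clear -ek hk; case: hk => [[? _]|?]; lia.
- have a0 := proj2 e0 isT; have a2 := proj2 e2 isT; have a3 := proj2 e3 isT.
  have [x1 [x2 x3]] : G1 = G0 /\ G2 = 0 /\ G3 = 0 by clear -a0 a2 a3; lra.
  subst G1 G2 G3; split => //.
  have : (2%N)%:R * (G0 * G0) = k%:R * (G0 * G0) by rewrite -hss !mul0r !addr0 add0r mulr2n mulrDl mul1r.
  move/(sscontra hc hG) => ek; subst k.
  case: hk => [[_ [[? ?]|[? ?]]]|hk3]; last by exfalso; lia.
  + by subst L0 L1; left; repeat split; clear -hd; lra.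
  + by subst L0 L1; right; repeat split; clear -hd; lra.
- have a0 := proj2 e0 isT; have a1 := proj2 e1 isT; have a3 := proj2 e3 isT.
  have [x1 [x2 x3]] : G1 = G0 /\ G2 = G0 /\ G3 = - G0 by clear -a0 a1 a3; lra.
  subst G1 G2 G3; exfalso.
  have : (4%N)%:R * (G0 * G0) = k%:R * (G0 * G0)
    by rewrite -hss mulrNN !mulrS mulr0n addr0 !mulrDl !mul1r add0r !addrA.
  move/(sscontra hc hG) => ek; clear -ek hk; case: hk => [[? _]|?]; lia.
- have a0 := proj2 e0 isT; have a1 := proj2 e1 isT; have a2 := proj2 e2 isT.
  have [x1 [x2 x3]] : G1 = G0 /\ G2 = G0 /\ G3 = G0 by clear -a0 a1 a2; lra.
  subst G1 G2 G3; exfalso.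
  have : (4%N)%:R * (G0 * G0) = k%:R * (G0 * G0)
    by rewrite -hss !mulrS mulr0n addr0 !mulrDl !mul1r add0r !addrA.
  move/(sscontra hc hG) => ek; clear -ek hk; case: hk => [[? _]|?]; lia.
Qed.

Lemma final5 (c d L0 L1 L2 L3 L4 G0 G1 G2 G3 G4 : R) (j : nat) :
  0 < c -> in3 c L0 -> in3 c L1 -> in3 c L2 -> in3 c L3 -> in3 c L4 -> G0 * G0 = c * c ->
  L0 - L1 = d -> 0 < L0 - L1 -> 0 < L1 - L2 -> 0 < L3 - L4 -> 0 < L3 + L4 ->
  (G0 - G1 = 0 <-> (0 != j)%N) -> (G1 - G2 = 0 <-> (1 != j)%N) ->
  (G2 - G3 = 0 <-> (2 != j)%N) -> (G3 - G4 = 0 <-> (3 != j)%N) ->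
  (G3 + G4 = 0 <-> (4 != j)%N) -> (j <= 4)%N ->
  0 + G0 * G0 + G1 * G1 + G2 * G2 + G3 * G3 + G4 * G4 =
  0 + L0 * L0 + L1 * L1 + L2 * L2 + L3 * L3 + L4 * L4 ->
  j = 2%N /\ L0 = d /\ L1 = 0 /\ L2 = - d /\ L3 = d /\ L4 = 0.
Proof.
move=> hc h0 h1 h2 h3 h4 hG hd h01 h12 h34 h34' e0 e1 e2 e3 e4 hj hss.
have [hL3 hL4] := tailvals hc h3 h4 h34 h34'.
have [hL0 [hL1 hL2]] := chain3vals hc h0 h1 h2 h01 h12.
subst L0 L1 L2 L3 L4.
have hsL : 0 + c * c + 0 * 0 + (- c) * (- c) + c * c + 0 * 0 = (3%N)%:R * (c * c) by ring.
rewrite hsL -hG in hss.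
case: j hj e0 e1 e2 e3 e4 hss => [|[|[|[|[|j]]]]] // _ e0 e1 e2 e3 e4 hss.
- have a1 := proj2 e1 isT; have a2 := proj2 e2 isT; have a3 := proj2 e3 isT;
  have a4 := proj2 e4 isT.
  have [x1 [x2 [x3 x4]]] : G1 = 0 /\ G2 = 0 /\ G3 = 0 /\ G4 = 0 by clear -a1 a2 a3 a4; lra.
  subst G1 G2 G3 G4; exfalso.
  have : (1%N)%:R * (G0 * G0) = (3%N)%:R * (G0 * G0) by rewrite -hss; ring.
  by move/(sscontra hc hG).
- have a0 := proj2 e0 isT; have a2 := proj2 e2 isT; have a3 := proj2 e3 isT;
  have a4 := proj2 e4 isT.
  have [x1 [x2 [x3 x4]]] : G1 = G0 /\ G2 = 0 /\ G3 = 0 /\ G4 = 0 by clear -a0 a2 a3 a4; lra.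
  subst G1 G2 G3 G4; exfalso.
  have : (2%N)%:R * (G0 * G0) = (3%N)%:R * (G0 * G0) by rewrite -hss; ring.
  by move/(sscontra hc hG).
- by repeat split; clear -hd; lra.
- have a0 := proj2 e0 isT; have a1 := proj2 e1 isT; have a2 := proj2 e2 isT;
  have a4 := proj2 e4 isT.
  have [x1 [x2 [x3 x4]]] : G1 = G0 /\ G2 = G0 /\ G3 = G0 /\ G4 = - G0 by clear -a0 a1 a2 a4; lra.
  subst G1 G2 G3 G4; exfalso.
  have : (5%N)%:R * (G0 * G0) = (3%N)%:R * (G0 * G0) by rewrite -hss; ring.
  by move/(sscontra hc hG).
- have a0 := proj2 e0 isT; have a1 := proj2 e1 isT; have a2 := proj2 e2 isT;
  have a3 := proj2 e3 isT.
  have [x1 [x2 [x3 x4]]] : G1 = G0 /\ G2 = G0 /\ G3 = G0 /\ G4 = G0 by clear -a0 a1 a2 a3; lra.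
  subst G1 G2 G3 G4; exfalso.
  have : (5%N)%:R * (G0 * G0) = (3%N)%:R * (G0 * G0) by rewrite -hss; ring.
  by move/(sscontra hc hG).
Qed.

End Aux3.
Theorem theorem5p10 (R : realType) (n : nat) (i j : 'I_n) (lam : 'I_n -> R) :
  (4 <= n)%N ->
  is_basic_weight i j lam ->
  exists m : nat, (0 < m)%N /\
    ((n = 4%N /\ val i = 1%N /\ val j = 1%N /\
       ((forall k : 'I_n, lam k = m%:R * nth 0 [:: 1; 0; 1; 0] k) \/
        (forall k : 'I_n, lam k = m%:R * nth 0 [:: 0; -1; 1; 0] k))) \/
     (n = 5%N /\ val i = 2%N /\ val j = 2%N /\
       (forall k : 'I_n, lam k = m%:R * nth 0 [:: 1; 0; -1; 1; 0] k))).
Proof.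
case: n i j lam => [|p] i j lam hn; first by [].
move=> [_ [hI [mu [hW [_ hJ]]]]].
have hp2 : (2 <= p)%N by lia.
pose L := fun k : nat => lam (inord k).
pose G := fun k : nat => mu (inord k).
have hL : forall k : 'I_p.+1, lam k = L k by move=> k; rewrite /L inord_val.
have F1 : forall k, (k < p)%N -> k != val i ->
    exists m, (0 < m)%N /\ L k - L k.+1 = m%:R.
  move=> k hk hki.
  have hne : inord k != i.
    apply: contra hki => /eqP <-; rewrite /= inordK //; lia.
  case: (hI _ hne) => m [hm e]; exists m; split => //.
  by rewrite -e dot_cs // dot_simple inordK ?ltnS ?hk //; lia.
have F1s : forall k, (k < p)%N -> k != val i -> 0 < L k - L k.+1.
  move=> k hk hki; case: (F1 k hk hki) => m [hm ->]; by rewrite ltr0n.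
have F2 : p != val i -> 0 < L p.-1 + L p.
  move=> hpi.
  have hne : ord_max != i by apply: contra hpi => /eqP <-.
  case: (hI _ hne) => m [hm e].
  move: e; rewrite dot_cs // dot_simple /= ltnn => ->; by rewrite ltr0n.
have Gf1 : forall k, (k < p)%N -> (G k - G k.+1 = 0 <-> k != val j).
  move=> k hk; have := hJ (inord k).
  rewrite dot_simple inordK ?ltnS ?hk; last by lia.
  have -> : (inord k == j) = (k == val j) by rewrite -(inj_eq val_inj) /= inordK //; lia.
  done.
have Gf2 : (G p.-1 + G p = 0 <-> p != val j).
  have := hJ ord_max; rewrite dot_simple /= ltnn.
  have -> : (ord_max == j) = (p == val j) by rewrite -(inj_eq val_inj).
  done.
have [Inv SS] := orbit_inv hW.
have SS' : \sum_(k < p.+1) G k * G k = \sum_(k < p.+1) L k * L k.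
  rewrite (eq_bigr (fun k : 'I_p.+1 => mu k * mu k)); last by move=> k _; rewrite /G inord_val.
  rewrite [RHS](eq_bigr (fun k : 'I_p.+1 => lam k * lam k)); last by move=> k _; rewrite /L inord_val.
  exact: SS.
have hjp : (val j <= p)%N by rewrite -ltnS ltn_ord.
have [Gs G0] := Gstruct hp2 hjp Gf1 Gf2.
have HV0 : forall l, (l <= p)%N -> in3 (G 0%N) (L l).
  move=> l hl; case: (Inv (inord l)) => k hk.
  have := Gs (val k) ltac:(rewrite -ltnS; exact: ltn_ord).
  rewrite /G inord_val -/(L l) => hk'.
  rewrite /in3 /L; case: hk => ->; case: hk' => [->|[->|->]]; rewrite ?oppr0 ?opprK; by auto.
have [c [hc [hcc HV]]] : exists c, 0 < c /\ G 0%N * G 0%N = c * c /\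
    (forall l, (l <= p)%N -> in3 c (L l)).
  case: (ler0P (G 0%N)) => h.
  - exists (- G 0%N); split; first by rewrite oppr_gt0 lt_neqAle G0 h.
    split; first ring.
    move=> l hl; have := HV0 l hl; rewrite /in3 opprK; tauto.
  - exists (G 0%N); split => //; split => //.
have hip : (val i <= p)%N by rewrite -ltnS ltn_ord.
have [q ep] : exists q, p = q.+3 by exists (p - 3)%N; lia.
subst p.
have : val i = q.+3 \/ val i = q.+2 \/ val i = q.+1 \/ (val i <= q)%N by lia.
case=> [hi|[hi|[hi|hi]]].
- exfalso; apply: (@chain4 _ c (L 0) (L 1) (L 2) (L 3)); try (apply: HV; lia);
    apply: F1s; try lia; apply/eqP; lia.
- exfalso; apply: (@tri _ c (L q) (L q.+1) (L q.+2) (L q.+3)); try (apply: HV; lia);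
    try (apply: F1s; try lia; apply/eqP; lia).
  apply: F2; apply/eqP; lia.
- have [hq|[hq|hq]] : q = 0%N \/ q = 1%N \/ (2 <= q)%N by lia.
  + subst q.
    case: (F1 0%N ltac:(lia) ltac:(apply/eqP; lia)) => m [hm hm'].
    move: SS'; rewrite !big_ord_recr !big_ord0 /= => hss.
    have := final4 hc (HV 0%N isT) (HV 1%N isT) (HV 2%N isT) (HV 3%N isT) hcc hm'
      ltac:(by rewrite ltr0n) (F1s 2%N isT ltac:(apply/eqP; lia))
      (F2 ltac:(apply/eqP; lia)) (Gf1 0%N isT) (Gf1 1%N isT) (Gf1 2%N isT) Gf2 hjp hss.
    move=> [hj1 [[e0 [e1 [e2 e3]]]|[e0 [e1 [e2 e3]]]]];
      exists m; (split; first done); left; (split; first done);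
      (split; first exact: hi); (split; first exact: hj1); [left|right];
      move=> k; rewrite hL; case: k => [[|[|[|[|k]]]] hk] //=;
      by rewrite ?mulr1 ?mulr0 ?mulrN1 ?e0 ?e1 ?e2 ?e3.
  + subst q.
    case: (F1 0%N ltac:(lia) ltac:(apply/eqP; lia)) => m [hm hm'].
    move: SS'; rewrite !big_ord_recr !big_ord0 /= => hss.
    have := final5 hc (HV 0%N isT) (HV 1%N isT) (HV 2%N isT) (HV 3%N isT) (HV 4%N isT) hcc hm'
      (F1s 0%N isT ltac:(apply/eqP; lia)) (F1s 1%N isT ltac:(apply/eqP; lia))
      (F1s 3%N isT ltac:(apply/eqP; lia))
      (F2 ltac:(apply/eqP; lia)) (Gf1 0%N isT) (Gf1 1%N isT) (Gf1 2%N isT) (Gf1 3%N isT)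
      Gf2 hjp hss.
    move=> [hj2 [e0 [e1 [e2 [e3 e4]]]]].
    exists m; (split; first done); right; (split; first done);
      (split; first exact: hi); (split; first exact: hj2).
    move=> k; rewrite hL; case: k => [[|[|[|[|[|k]]]]] hk] //=;
      by rewrite ?mulr1 ?mulr0 ?mulrN1 ?e0 ?e1 ?e2 ?e3 ?e4.
  + exfalso; apply: (@chain4 _ c (L (q-2)%N) (L (q-2)%N.+1) (L (q-2)%N.+2) (L (q-2)%N.+3)); try (apply: HV; lia);
      apply: F1s; try lia; apply/eqP; lia.
- exfalso; apply: (@tail3 _ c (L q.+1) (L q.+2) (L q.+3)); try (apply: HV; lia);
    try (apply: F1s; try lia; apply/eqP; lia).
  apply: F2; apply/eqP; lia.
Qed.
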